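(* Let $A$ be a hyperoperator on $\mathbb{R}^n$ on the complex Banach space $X$ and let $f\in\mathcal{E}(\mathbb{R}^n)$ be real-valued. Assume that $b=f(a)$ is bounded, i.e. extends to a bounded operator $\bar b$ on $X$. Then $f(\sigma(A))\subset\sigma(\bar b)$, where $\sigma(\bar b)$ is the spectrum of the bounded operator $\bar b$.
   Context: $X$ is a complex Banach space, $L(X)$ the bounded operators. $\mathcal{D}(\mathbb{R}^n)=C_c^\infty(\mathbb{R}^n)$, $\mathcal{E}(\mathbb{R}^n)=C^\infty(\mathbb{R}^n)$. A hyperoperator on $\mathbb{R}^n$ is a linear map $A:\mathcal{D}(\mathbb{R}^n)\to L(X)$, continuous ($A(\phi_j)\to0$ in operator norm when $\phi_j\to0$ in $\mathcal{D}(\mathbb{R}^n)$), multiplicative, with (i) $D_A:=\bigcup_\phi\operatorname{Im}A(\phi)$ dense and (ii) $\bigcap_\phi\operatorname{Ker}A(\phi)=\{0\}$. For smooth real-valued $f$ and $x\in D_A$ written $x=A(\phi)y$, $f(a)x:=A(f\phi)y$ (well defined). $\sigma(A)$ is the support of $A$ as an $L(X)$-valued distribution. *)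

(* Defs.v *)
From HB Require Import structures.
From mathcomp Require Import all_boot all_order all_algebra.
From mathcomp Require Import all_classical all_reals all_analysis.
From mathcomp Require Import complex.
Import Order.TTheory GRing.Theory Num.Theory.
Import numFieldNormedType.Exports.

Set Implicit Arguments.
Unset Strict Implicit.
Unset Printing Implicit Defensive.

Local Open Scope classical_set_scope.
Local Open Scope ring_scope.

Section Hyper.
Variables (R : realType) (n : nat).

Definition partial (i : 'I_n) (g : 'rV[R]_n -> R) : 'rV[R]_n -> R :=
  fun x => 'D_(delta_mx 0 i) g x.

Definition dpart (s : seq 'I_n) (g : 'rV[R]_n -> R) : 'rV[R]_n -> R :=
  foldr partial g s.

Definition smooth (g : 'rV[R]_n -> R) : Prop :=
  forall s : seq 'I_n, continuous (dpart s g) /\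
    forall (i : 'I_n) (x : 'rV[R]_n), derivable (dpart s g) x (delta_mx 0 i).

Definition reP (phi : 'rV[R]_n -> R[i]) : 'rV[R]_n -> R :=
  fun x => complex.Re (phi x).
Definition imP (phi : 'rV[R]_n -> R[i]) : 'rV[R]_n -> R :=
  fun x => complex.Im (phi x).

Definition smoothC (phi : 'rV[R]_n -> R[i]) : Prop :=
  smooth (reP phi) /\ smooth (imP phi).

Definition fsupport (phi : 'rV[R]_n -> R[i]) : set 'rV[R]_n :=
  closure [set x | phi x != 0].

Definition test_fun (phi : 'rV[R]_n -> R[i]) : Prop :=
  smoothC phi /\ compact (fsupport phi).

Definition D_cvg0 (u : nat -> 'rV[R]_n -> R[i]) : Prop :=
  (forall j, test_fun (u j)) /\
  exists K : set 'rV[R]_n, compact K /\ (forall j, fsupport (u j) `<=` K) /\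
    forall (s : seq 'I_n) (eps : R), 0 < eps ->
      \forall j \near \oo, forall x : 'rV[R]_n,
        `|dpart s (reP (u j)) x| <= eps /\ `|dpart s (imP (u j)) x| <= eps.

Variable X : completeNormedModType R[i].

Definition bounded_op (T : X -> X) : Prop :=
  (forall (a : R[i]) (x y : X), T (a *: x + y) = a *: T x + T y) /\
  continuous T.

Definition hyperoperator (A : ('rV[R]_n -> R[i]) -> X -> X) : Prop :=
  (forall phi, test_fun phi -> bounded_op (A phi)) /\
  (forall (a : R[i]) phi psi, test_fun phi -> test_fun psi ->
     A (fun x => a * phi x + psi x) = (fun y => a *: A phi y + A psi y)) /\
  (forall u, D_cvg0 u -> forall eps : R, 0 < eps ->
     \forall j \near \oo, forall y : X, `|A (u j) y| <= (eps%:C)%C * `|y|) /\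
  (forall phi psi, test_fun phi -> test_fun psi ->
     A (fun x => phi x * psi x) = (A phi \o A psi)) /\
  closure (\bigcup_(phi in test_fun) range (A phi)) = setT /\
  (forall y : X, (forall phi, test_fun phi -> A phi y = 0) -> y = 0).

(* sigma(A): the support of A as an L(X)-valued distribution *)
Definition hsupport (A : ('rV[R]_n -> R[i]) -> X -> X) : set 'rV[R]_n :=
  [set x | forall U : set 'rV[R]_n, open U -> U x ->
     exists phi, [/\ test_fun phi, fsupport phi `<=` U & exists y, A phi y != 0]].

Definition spectrum (T : X -> X) : set R[i] :=
  [set l | ~ exists S : X -> X, [/\ bounded_op S,
      (forall y, S (T y - l *: y) = y) &
      (forall y, T (S y) - l *: S y = y)]].

End Hyper.

(* Main.v *)
Require Import Defs.
From HB Require Import structures.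
From mathcomp Require Import all_boot all_order all_algebra.
From mathcomp Require Import all_classical all_reals all_analysis.
From mathcomp Require Import complex.
From mathcomp Require Import zify ring lra.
Import Order.TTheory GRing.Theory Num.Theory.
Import numFieldNormedType.Exports.
Local Open Scope classical_set_scope.
Local Open Scope ring_scope.

Unset Implicit Arguments.

Lemma polygeo (R : realType) (p d : nat) (M eps : R) : 0 < eps -> 0 <= M ->
  \forall m \near \oo, (m.+1)%:R ^+ p * expR (-1) ^+ (m - d) * M <= eps.
Proof.
move=> e0 M0.
pose Cst : R := (d.+2)%:R ^+ p * p.+1`!%:R * M.
near=> m.
have hm : (d.+1 <= m)%N by near: m; exact: nbhs_infty_ge.
have hr : Cst / eps + d%:R <= m%:R by near: m; exact: nbhs_infty_ger.
set k := (m - d)%N.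
have kE : k%:R = m%:R - d%:R :> R by rewrite natrB //; exact: ltnW.
have k0 : (0 : R) < k%:R by rewrite ltr0n /k; lia.
have E : expR (-1) ^+ k = (expR k%:R)^-1 :> R by rewrite -expRM_natl mulrN1 expRN.
have Eb : k%:R ^+ p.+1 / p.+1`!%:R <= expR (k%:R : R).
  by have := expR_ge1Dxn p (ler0n R k); apply: le_trans; rewrite lerDr.
have f0 : (0 : R) < p.+1`!%:R by rewrite ltr0n fact_gt0.
have Mb : (m.+1)%:R ^+ p <= (d.+2)%:R ^+ p * k%:R ^+ p :> R.
  rewrite -exprMn -natrM; apply: lerXn2r; rewrite ?nnegrE ?ler0n // ler_nat /k; nia.
have kp0 : (0 : R) < k%:R ^+ p.+1 by rewrite exprn_gt0.
have Vb : (expR (k%:R : R))^-1 <= p.+1`!%:R / k%:R ^+ p.+1.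
  rewrite -[_ / _]invf_div; rewrite lef_pV2 ?posrE ?expR_gt0 ?divr_gt0 //.
rewrite E.
apply: (@le_trans _ _ ((d.+2)%:R ^+ p * k%:R ^+ p * (p.+1`!%:R / k%:R ^+ p.+1) * M)).
  apply: ler_wpM2r => //; apply: ler_pM => //.
  all: try by rewrite exprn_ge0 // ler0n.
  all: try by rewrite invr_ge0 expR_ge0.
  all: idtac.
have -> : (d.+2)%:R ^+ p * k%:R ^+ p * (p.+1`!%:R / k%:R ^+ p.+1) * M = Cst / k%:R :> R.
  rewrite /Cst exprS; field.
  by rewrite gt_eqF // gt_eqF // exprn_gt0.
rewrite ler_pdivrMr // mulrC -ler_pdivrMr //.
by rewrite kE lerBrDr.
Unshelve. all: by end_near. Qed.

Set Implicit Arguments.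
Unset Strict Implicit.
Unset Printing Implicit Defensive.


Section Smooth.
Variables (R : realType) (n : nat).
Local Notation V := 'rV[R]_n.
Local Notation e i := (delta_mx 0 i : V).
Implicit Types (F G : V -> R).

Lemma dD F G (x v : V) : derivable F x v -> derivable G x v ->
  'D_v (fun y => F y + G y) x = 'D_v F x + 'D_v G x.
Proof. exact: deriveD. Qed.
Lemma dbD F G (x v : V) : derivable F x v -> derivable G x v ->
  derivable (fun y => F y + G y) x v.
Proof. exact: derivableD. Qed.
Lemma dM F G (x v : V) : derivable F x v -> derivable G x v ->
  'D_v (fun y => F y * G y) x = F x * 'D_v G x + G x * 'D_v F x.
Proof. exact: deriveM. Qed.
Lemma dbM F G (x v : V) : derivable F x v -> derivable G x v ->
  derivable (fun y => F y * G y) x v.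
Proof. exact: derivableM. Qed.
Lemma dX F k (x v : V) : derivable F x v ->
  'D_v (fun y => F y ^+ k) x = k%:R * F x ^+ k.-1 * 'D_v F x.
Proof. by move=> h; rewrite -exprfctE deriveX. Qed.
Lemma dbX F k (x v : V) : derivable F x v -> derivable (fun y => F y ^+ k) x v.
Proof. by move=> h; rewrite -exprfctE; exact: derivableX. Qed.
Lemma dC (c : R) (x v : V) : 'D_v (fun _ => c) x = 0.
Proof. exact: derive_cst. Qed.
Lemma dbC (c : R) (x v : V) : derivable (fun _ : V => c) x v.
Proof. exact: derivable_cst. Qed.
Lemma cD F G : continuous F -> continuous G -> continuous (fun y => F y + G y).
Proof. by move=> a b x; exact: (continuousD (a x) (b x)). Qed.
Lemma cM F G : continuous F -> continuous G -> continuous (fun y => F y * G y).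
Proof. by move=> a b x; exact: (continuousM (a x) (b x)). Qed.
Lemma cC (c : R) : continuous (fun _ : V => c).
Proof. exact: cst_continuous. Qed.

Lemma dpart_rcons s i F : dpart (rcons s i) F = dpart s (partial i F).
Proof. by rewrite /dpart foldr_rcons. Qed.

Definition smk k F := forall s : seq 'I_n, (size s <= k)%N ->
  continuous (dpart s F) /\ forall i x, derivable (dpart s F) x (e i).

Lemma smooth_smk F : smooth F <-> forall k, smk k F.
Proof.
split; first by move=> h k s _; exact: h.
by move=> h s; exact: (h (size s) s (leqnn _)).
Qed.

Lemma smkW k F : smk k.+1 F -> smk k F.
Proof. by move=> h s hs; apply: h; exact: leqW. Qed.

Lemma dpartD k F G s : smk k F -> smk k G -> (size s <= k.+1)%N ->
  dpart s (fun y => F y + G y) = (fun y => dpart s F y + dpart s G y).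
Proof.
move=> hF hG; elim: s => [|i s IH] //= hs.
have hs' : (size s <= k)%N by [].
rewrite /partial IH; last exact: leqW.
apply/funext => x; apply: dD; [exact: (hF s hs').2|exact: (hG s hs').2].
Qed.


Lemma smooth_cont F : smooth F -> continuous F.
Proof. by move=> h; exact: (h [::]).1. Qed.
Lemma smooth_der F i x : smooth F -> derivable F x (e i).
Proof. by move=> h; exact: (h [::]).2. Qed.

Lemma smooth_partial F i : smooth F -> smooth (partial i F).
Proof. by move=> h s; rewrite -dpart_rcons; exact: h. Qed.

Lemma partialM F G i : smooth F -> smooth G ->
  partial i (fun y => F y * G y) = (fun y => partial i F y * G y + F y * partial i G y).
Proof.
move=> hF hG; apply/funext => x; rewrite /partial dM; last 2 first.
  exact: smooth_der. exact: smooth_der.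
by rewrite addrC mulrC.
Qed.

Lemma partialD F G i : smooth F -> smooth G ->
  partial i (fun y => F y + G y) = (fun y => partial i F y + partial i G y).
Proof.
move=> hF hG; apply/funext => x; rewrite /partial dD //; exact: smooth_der.
Qed.

Lemma smkM k : forall F G, smooth F -> smooth G -> smk k (fun y => F y * G y).
Proof.
elim: k => [|k IH] F G sF sG s hs.
  case: s hs => // _ /=; split; first by apply: cM; exact: smooth_cont.
  by move=> i x; apply: dbM; exact: smooth_der.
case/lastP: s hs => [|s i] hs.
  rewrite /=; split; first by apply: cM; exact: smooth_cont.
  by move=> j x; apply: dbM; exact: smooth_der.
rewrite size_rcons ltnS in hs.
rewrite dpart_rcons partialM //.
have h1 := IH _ _ (smooth_partial i sF) sG.
have h2 := IH _ _ sF (smooth_partial i sG).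
rewrite (dpartD h1 h2); last exact: leqW.
split; first by apply: cD; [exact: (h1 s hs).1|exact: (h2 s hs).1].
by move=> j x; apply: dbD; [exact: (h1 s hs).2|exact: (h2 s hs).2].
Qed.

Lemma smoothM F G : smooth F -> smooth G -> smooth (fun y => F y * G y).
Proof. by move=> a b; apply/smooth_smk => k; exact: smkM. Qed.

Lemma smoothD F G : smooth F -> smooth G -> smooth (fun y => F y + G y).
Proof.
move=> a b s; have ha := (smooth_smk F).1 a (size s).
have hb := (smooth_smk G).1 b (size s).
rewrite (dpartD ha hb); last exact: leqW.
split; first by apply: cD; [exact: (a s).1|exact: (b s).1].
by move=> j x; apply: dbD; [exact: (a s).2|exact: (b s).2].
Qed.

Lemma dpart_cst (c : R) (s : seq (ordinal n)) : dpart s (fun _ : V => c) = fun _ => if s is [::] then c else 0.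
Proof.
elim: s => [|i s IH] //=; rewrite IH; apply/funext => x; rewrite /partial.
by case: s IH => [|j s] _; exact: dC.
Qed.

Lemma smooth_cst (c : R) : smooth (fun _ : V => c).
Proof.
move=> s; rewrite dpart_cst; split; first exact: cC.
by move=> i x; exact: dbC.
Qed.

Lemma smoothX F k : smooth F -> smooth (fun y => F y ^+ k).
Proof.
move=> sF; elim: k => [|k IH].
  under eq_fun do rewrite expr0; exact: smooth_cst.
under eq_fun do rewrite exprS; exact: smoothM.
Qed.

Lemma partial_loc F (O : set V) i : open O -> (forall y, O y -> F y = 0) ->
  forall y, O y -> partial i F y = 0.
Proof.
move=> oO h y Oy; rewrite /partial (@near_eq_derive _ _ _ F (fun _ => 0)).
  exact: dC.
near=> z; apply: h; near: z; exact: open_nbhs_nbhs.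
Unshelve. all: by end_near. Qed.

Lemma dpart_loc F (O : set V) s : open O -> (forall y, O y -> F y = 0) ->
  forall y, O y -> dpart s F y = 0.
Proof.
move=> oO h; elim: s => [|i s IH] //=; exact: partial_loc.
Qed.

End Smooth.



Section Est.
Variables (R : realType) (n : nat).
Local Notation V := 'rV[R]_n.
Local Notation e i := (delta_mx 0 i : V).
Implicit Types (F G W : V -> R).

Lemma bound_compact (K : set V) W : compact K -> continuous W ->
  exists2 M, 0 < M & forall y, K y -> `|W y| <= M.
Proof.
move=> cK cW.
have := compact_bounded (continuous_compact (continuous_subspaceT cW) cK).
move=> /pinfty_ex_gt0 [M M0 HM]; exists M => // y Ky.
by apply: HM; exists y.
Qed.

Variables (h : V -> R) (K : set V).
Hypotheses (sh : smooth h) (cK : compact K) (clK : closed K)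
  (hK : forall y, K y -> `|h y| <= expR (-1)).

Lemma smooth_form (c : R) k W : smooth W ->
  smooth (fun y => c * (h y ^+ k * W y)).
Proof.
move=> sW; apply: smoothM; first exact: smooth_cst.
by apply: smoothM => //; exact: smoothX.
Qed.

Lemma partial_form (c : R) k W i : smooth W ->
  partial i (fun y => c * (h y ^+ k * W y)) =
  (fun y => (c * k%:R) * (h y ^+ k.-1 * (partial i h y * W y)) +
            c * (h y ^+ k * partial i W y)).
Proof.
move=> sW; apply/funext => y; rewrite /partial dM; last 2 first.
- exact: dbC.
- by apply: dbM; [apply: dbX|]; exact: smooth_der.
rewrite dC mulr0 addr0 dM; last 2 first.
- by apply: dbX; exact: smooth_der.
- exact: smooth_der.
rewrite dX; last exact: smooth_der.
rewrite /partial; ring.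
Qed.

Lemma est (s : seq 'I_n) : forall (d p : nat) (c : nat -> R) W,
  (forall m, `|c m| <= (m.+1)%:R ^+ p) -> smooth W ->
  (forall y, ~ K y -> W y = 0) ->
  forall eps, 0 < eps -> \forall m \near \oo, forall x,
    `|dpart s (fun y => c m * (h y ^+ (m - d) * W y)) x| <= eps.
Proof.
elim/last_ind: s => [|s i IH] d p c W hc sW W0 eps e0.
  have [M M0 HM] := bound_compact cK (smooth_cont sW).
  apply: filterS (@polygeo R p d M eps e0 (ltW M0)) => m hm x /=.
  have [Kx|nKx] := pselect (K x); last first.
    by rewrite W0 // !mulr0 normr0 ltW.
  apply: le_trans hm; rewrite !normrM normrX -mulrA.
  apply: ler_pM; [by []|by rewrite mulr_ge0 // exprn_ge0|exact: hc|].
  apply: ler_pM; [by rewrite exprn_ge0|by []| |exact: HM].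
  by apply: lerXn2r; rewrite ?nnegrE ?expR_ge0 //; exact: hK.
have oK : open (~` K) by exact: closed_openC.
have W20 : forall y, ~ K y -> partial i W y = 0.
  by move=> y ny; apply: (partial_loc i oK) => // z; exact: W0.
have H1 := IH d.+1 p.+1 (fun m => c m * (m - d)%:R) (fun y => partial i h y * W y).
have H2 := IH d p c (partial i W).
have hc1 : forall m, `|c m * (m - d)%:R| <= (m.+1)%:R ^+ p.+1.
  move=> m; rewrite normrM normr_nat exprS mulrC.
  by apply: ler_pM; [exact: ler0n|by []|rewrite ler_nat; lia|exact: hc].
have W10 : forall y, ~ K y -> partial i h y * W y = 0.
  by move=> y nKy; rewrite W0 // mulr0.
have {H1}H1 := H1 hc1 (smoothM (smooth_partial i sh) sW) W10 (eps / 2) (divr_gt0 e0 (ltr0Sn _ 1)).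
have {H2}H2 := H2 hc (smooth_partial i sW) W20 (eps / 2) (divr_gt0 e0 (ltr0Sn _ 1)).
apply: (@filterS2 _ _ _ _ _ _ _ H1 H2) => m h1 h2 x.
rewrite dpart_rcons partial_form // -subnS.
have s1 := (smooth_smk _).1 (smooth_form (c m * (m - d)%:R) (m - d.+1)
   (smoothM (smooth_partial i sh) sW)) (size s).
have s2 := (smooth_smk _).1 (smooth_form (c m) (m - d) (smooth_partial i sW)) (size s).
rewrite (dpartD s1 s2) //.
apply: le_trans (ler_normD _ _) _; rewrite [eps]splitr; apply: lerD.
  exact: h1.
exact: h2.
Qed.

End Est.



Section Op.
Variable (R : realType).

Lemma ge0_ReC (z : R[i]) : 0 <= z -> z = ((complex.Re z)%:C)%C.
Proof.
move=> hz; apply/eqP; rewrite eq_complex /= eqxx /=.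
by rewrite (ger0_Im hz) eqxx.
Qed.

Lemma ReC_ge0 (z : R[i]) : 0 <= z -> 0 <= complex.Re z.
Proof. by move=> hz; rewrite -ler0c -ge0_ReC. Qed.

Variable (X : normedModType R[i]).

Lemma opbound (S : X -> X) : (forall (a : R[i]) (x y : X), S (a *: x + y) = a *: S x + S y) ->
  continuous S -> exists2 C : R, 0 < C & forall z, `|S z| <= (C%:C)%C * `|z|.
Proof.
move=> Slin Scont.
have S0 : S 0 = 0.
  have := Slin 1 0 0; rewrite scaler0 addr0 scale1r.
  by rewrite -[X in X = _]addr0 => /addrI.
have SZ a z : S (a *: z) = a *: S z by rewrite -[a *: z]addr0 Slin S0 addr0.
have := Scont 0; rewrite /continuous_at S0 => Sc.
have := cvgr0_norm_lt _ Sc. move=> HH. have := HH _ 1 ltr01.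
move=> H1; have [/= del d0 Hd] := (nbhs_norm0P (V:=X)).1 (H1 (nbhs_filter 0)).
set d := complex.Re del.
have dE : del = (d%:C)%C by exact/ge0_ReC/ltW.
have dpos : 0 < d by rewrite -ltcR -dE.
exists (2 / d); first by rewrite divr_gt0.
move=> z; have [->|z0] := eqVneq z 0.
  by rewrite S0 !normr0 mulr0.
have nz : 0 < `|z| by rewrite normr_gt0.
pose t : R[i] := (d / 2)%:C%C / `|z|.
have t0 : 0 < t by rewrite divr_gt0 // ltcR divr_gt0.
have := Hd (t *: z); rewrite /=. rewrite !normrZ gtr0_norm // SZ normrZ gtr0_norm //.
have -> : t * `|z| = (d / 2)%:C%C by rewrite /t divfK // gt_eqF.
rewrite dE ltcR ltr_pdivrMr // ltr_pMr // ltr1n => /(_ isT).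
rewrite -ltr_pdivlMl // => h; apply: ltW; apply: lt_le_trans h _.
rewrite /t rmorphM rmorphV ?unitfE ?gt_eqF // rmorphM rmorphV ?unitfE ?gt_eqF //.
rewrite le_eqVlt; apply/orP; left; apply/eqP.
have d0' : (d%:C)%C != 0 :> R[i] by rewrite gt_eqF // ltcR.
have n2 : (2%:C)%C != 0 :> R[i] by rewrite gt_eqF // ltcR.
have nz0 : `|z| != 0 by rewrite gt_eqF.
field. by rewrite nz0 andbT.
Qed.

End Op.



Section TF.
Variables (R : realType) (n : nat).
Local Notation V := 'rV[R]_n.

Lemma reP_mulC (F : V -> R) (phi : V -> R[i]) :
  reP (fun y => ((F y)%:C)%C * phi y) = (fun y => F y * reP phi y).
Proof. by apply/funext => y; rewrite /reP; case: (phi y) => a b /=; ring. Qed.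

Lemma imP_mulC (F : V -> R) (phi : V -> R[i]) :
  imP (fun y => ((F y)%:C)%C * phi y) = (fun y => F y * imP phi y).
Proof. by apply/funext => y; rewrite /imP; case: (phi y) => a b /=; ring. Qed.

Lemma fsupport_mulC (F : V -> R) (phi : V -> R[i]) :
  fsupport (fun y => ((F y)%:C)%C * phi y) `<=` fsupport phi.
Proof.
apply: closureS => y /=; apply: contra => /eqP ->; by rewrite mulr0.
Qed.

Lemma test_mulC (F : V -> R) (phi : V -> R[i]) : smooth F -> test_fun phi ->
  test_fun (fun y => ((F y)%:C)%C * phi y).
Proof.
move=> sF [[sr si] cp]; split; first split.
- by rewrite reP_mulC; exact: smoothM.
- by rewrite imP_mulC; exact: smoothM.
apply: (@subclosed_compact _ _ (fsupport phi)) => //; [exact: closed_closure|exact: fsupport_mulC].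
Qed.

Lemma fsupport0 (phi : V -> R[i]) y : ~ fsupport phi y -> phi y = 0.
Proof.
move=> ny; apply/eqP; apply/negPn/negP => hy; apply: ny; exact: subset_closure.
Qed.

End TF.

Lemma real_zero (R : realType) (a b : R) : 0 <= a -> 0 <= b ->
  (forall eps, 0 < eps -> a <= eps * b) -> a = 0.
Proof.
move=> a0 b0 H; apply/eqP; rewrite eq_le a0 andbT; rewrite leNgt; apply/negP => ap.
have t0 : 0 < 2 * (b + 1) by lra.
have := H (a / (2 * (b + 1))) (divr_gt0 ap t0).
rewrite mulrAC ler_pdivlMr //; nra.
Qed.


Unset Implicit Arguments.
Set Strict Implicit.
Set Printing Implicit Defensive.

Theorem lemma5p6 (R : realType) (n : nat) (X : completeNormedModType R[i])
  (A : ('rV[R]_n -> R[i]) -> X -> X) (f : 'rV[R]_n -> R) (bbar : X -> X) :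
  hyperoperator A -> smooth f -> bounded_op bbar ->
  (forall (phi : 'rV[R]_n -> R[i]) (y : X), test_fun phi ->
     bbar (A phi y) = A (fun x => ((f x)%:C)%C * phi x) y) ->
  forall x : 'rV[R]_n, hsupport A x -> spectrum bbar (((f x)%:C)%C).
Proof.
move=> hA sf bb hbb x0 hx0; rewrite /spectrum /= => -[S [[Slin Scont] HS1 HS2]].
case: hA => Aop [Alin [Acont _]].
set lam := ((f x0)%:C)%C.
have [C C0 HC] := opbound Slin Scont.
pose g := fun y => f y + - f x0.
have sg : smooth g := smoothD sf (smooth_cst _).
pose h := fun y => C * g y.
have sh : smooth h := smoothM (smooth_cst C) sg.
pose U := [set y | `|h y| < expR (-1)].
have oU : open U.
  have -> : U = (fun y => `|h y|) @^-1` [set r : R | r < expR (-1)] by [].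
  apply: open_comp; last exact: open_lt.
  move=> y _.
  have hc : {for y, continuous h} by move: (smooth_cont sh); exact.
  have hn : {for h y, continuous (Num.Def.normr : R -> R)} by move: (@norm_continuous R R^o); exact.
  exact: (@continuous_comp _ _ _ h (Num.Def.normr : R -> R) y hc hn).
have Ux0 : U x0 by rewrite /U /h /g /= addrN mulr0 normr0 expR_gt0.
have [phi [tphi sphiU [y Ay]]] := hx0 U oU Ux0.
set K := fsupport phi.
have cK : compact K := tphi.2.
have clK : closed K by exact: closed_closure.
have hK : forall z, K z -> `|h z| <= expR (-1) by move=> z /sphiU /ltW.
pose v m := fun z => ((g z ^+ m)%:C)%C * phi z.
pose u m := fun z => ((h z ^+ m)%:C)%C * phi z.
have tv m : test_fun (v m) := test_mulC (smoothX m sg) tphi.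
have tu m : test_fun (u m) := test_mulC (smoothX m sh) tphi.
pose z0 := fun z => (((0 : R))%:C)%C * phi z.
have tz0 : test_fun z0 := test_mulC (smooth_cst 0) tphi.
have Az0 : forall w, A z0 w = 0.
  move=> w; have := Alin (-1) z0 z0 tz0 tz0.
  have -> : (fun x => -1 * z0 x + z0 x) = z0.
    by apply/funext => x; rewrite mulN1r addNr /z0 rmorph0 mul0r.
  by move=> /(congr1 (fun F => F w)) /=; rewrite scaleN1r addNr.
have rec m w : A (v m) w = S (A (v m.+1) w).
  have := HS1 (A (v m) w); rewrite hbb // => <-; congr (S _).
  have tfv := test_mulC sf (tv m).
  have E := Alin (- lam) (v m) _ (tv m) tfv.
  have Ev : (fun x => - lam * v m x + ((f x)%:C)%C * v m x) = v m.+1.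
    apply/funext => x; rewrite /v /g exprS rmorphM rmorphD rmorphN /lam; ring.
  by rewrite -Ev E /= scaleNr addrC.
have bound m : `|A phi y| <= (((C%:C)%C) ^+ m) * `|A (v m) y|.
  elim: m => [|m IH].
    have -> : v 0%N = phi by apply/funext => z; rewrite /v expr0 rmorph1 mul1r.
    by rewrite expr0 mul1r.
  apply: (le_trans IH); rewrite (rec m y) exprSr -mulrA ler_wpM2l //.
    by rewrite exprn_ge0 // ler0c ltW.
have Au m w : A (u m) w = (((C%:C)%C) ^+ m) *: A (v m) w.
  have := Alin (((C%:C)%C) ^+ m) (v m) z0 (tv m) tz0.
  have -> : (fun x => ((C%:C)%C) ^+ m * v m x + z0 x) = u m.
    apply/funext => x; rewrite /z0 rmorph0 mul0r addr0 /v /u /h exprMn rmorphM rmorphXn.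
    by rewrite !rmorphXn mulrA.
  by move=> ->; rewrite Az0 addr0.
have phi0 : forall z, ~ K z -> phi z = 0 by move=> z; exact: fsupport0.
have Du : D_cvg0 u.
  split => //; exists K; split => //; split.
    by move=> j; exact: fsupport_mulC.
  move=> s eps e0.
  have hc1 : forall m : nat, `|(fun _ : nat => (1 : R)) m| <= (m.+1)%:R ^+ 0.
    by move=> m; rewrite normr1 expr0.
  have W1 : forall z, ~ K z -> reP phi z = 0 by move=> z /phi0; rewrite /reP => ->.
  have W2 : forall z, ~ K z -> imP phi z = 0 by move=> z /phi0; rewrite /imP => ->.
  have H1 := @est _ _ _ _ sh cK clK hK s 0 0 (fun _ => 1) (reP phi) hc1 tphi.1.1 W1 eps e0.
  have H2 := @est _ _ _ _ sh cK clK hK s 0 0 (fun _ => 1) (imP phi) hc1 tphi.1.2 W2 eps e0.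
  apply: (@filterS2 _ _ _ _ _ _ _ H1 H2) => m h1 h2 x; split.
    by rewrite /u reP_mulC; move: (h1 x); under eq_fun do rewrite subn0 mul1r.
  by rewrite /u imP_mulC; move: (h2 x); under eq_fun do rewrite subn0 mul1r.
have key : forall eps : R, 0 < eps -> `|A phi y| <= ((eps%:C)%C) * `|y|.
  move=> eps e0; have [N _ HN] := Acont u Du eps e0.
  apply: (le_trans (bound N)).
  have := HN N (leqnn N) y; rewrite Au normrZ ger0_norm //.
  by rewrite exprn_ge0 // ler0c ltW.
have a0 : complex.Re `|A phi y| = 0.
  apply: (@real_zero _ _ (complex.Re `|y|)); [exact: ReC_ge0|exact: ReC_ge0|] => eps e0.
  have := key eps e0.
  rewrite [X in X <= _](ge0_ReC (normr_ge0 _)) [X in _ <= _ * X](ge0_ReC (normr_ge0 y)).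
  by rewrite -rmorphM lecR.
move/negP: Ay; apply; rewrite -normr_eq0 (ge0_ReC (normr_ge0 _)) a0.
by rewrite rmorph0.
Qed.
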